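(* Let $e_1,e_2$ be two edges of $F_4$ with no common end-vertex. Let $H$ be obtained from $F_4$ by subdividing each of $e_1$ and $e_2$ with one new vertex and then adding an edge between these two new vertices. Then $H$ contains $K_{3,4}$ as a minor.
   Context: $F_4$ is the graph with vertex set $\{f^1,f^2\}\cup\{f^i_j: i\in\{1,2\}, j\in\{1,2,3,4\}\}$ and the 16 edges: for each $i\in\{1,2\}$, $f^if^i_1$, $f^if^i_2$, $f^if^i_4$, $f^i_3f^i_1$, $f^i_3f^i_2$, $f^i_3f^i_4$; and $f^1_jf^2_{5-j}$ for $j=1,2,3,4$. *)

(* Defs.v *)
From mathcomp Require Import all_boot.
Set Implicit Arguments. Unset Strict Implicit. Unset Printing Implicit Defensive.

(* Simple graphs are given by a symmetric irreflexive relation on a finType. *)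

Definition connected_in (T : finType) (e : rel T) (S : {set T}) : Prop :=
  forall x y, x \in S -> y \in S ->
    connect [rel a b | e a b && (a \in S) && (b \in S)] x y.

Definition has_minor (T K : finType) (e : rel T) (eK : rel K) : Prop :=
  exists phi : K -> {set T},
    [/\ forall k, phi k != set0,
        forall k, connected_in e (phi k),
        forall k k', k != k' -> [disjoint phi k & phi k'] &
        forall k k', eK k k' ->
          exists x y, [/\ x \in phi k, y \in phi k' & e x y]].

Definition K34_rel : rel ('I_3 + 'I_4)%type :=
  fun a b => match a, b with
             | inl _, inr _ | inr _, inl _ => true
             | _, _ => false
             end.

(* F_4 on vertex set 'I_10 with labelling
   f^1 = 0, f^2 = 1, f^1_j = 1 + j, f^2_j = 5 + j  (j = 1..4). *)
Definition F4_edges : seq (nat * nat) :=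
  [:: (0,2); (0,3); (0,5); (4,2); (4,3); (4,5);     (* i = 1 *)
      (1,6); (1,7); (1,9); (8,6); (8,7); (8,9);     (* i = 2 *)
      (2,9); (3,8); (4,7); (5,6)].                  (* f^1_j f^2_{5-j} *)

Definition F4_adj : rel 'I_10 :=
  fun a b => ((nat_of_ord a, nat_of_ord b) \in F4_edges)
          || ((nat_of_ord b, nat_of_ord a) \in F4_edges).

Definition same_edge (a b u v : 'I_10) : bool :=
  ((a == u) && (b == v)) || ((a == v) && (b == u)).

Definition H_rel (u v x y : 'I_10) : rel ('I_10 + bool)%type :=
  fun p q => match p, q with
    | inl a, inl b => F4_adj a b && ~~ same_edge a b u v && ~~ same_edge a b x y
    | inl a, inr false | inr false, inl a => (a == u) || (a == v)
    | inl a, inr true  | inr true,  inl a => (a == x) || (a == y)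
    | inr s, inr t => s != t
    end.

(* Main.v *)
Require Import Defs.
From mathcomp Require Import all_boot.
Set Implicit Arguments. Unset Strict Implicit. Unset Printing Implicit Defensive.

Section Gen.
Variables (T : finType) (e : rel T).

Fixpoint chk (p r : seq T) : bool :=
  match r with
  | [::] => true
  | z :: r' => has (fun w => e w z && e z w) p && chk (rcons p z) r'
  end.

Lemma chkP (S : {set T}) (p r : seq T) :
  chk p r -> {subset p <= S} -> {subset r <= S} ->
  (forall a b, a \in p -> b \in p ->
     connect [rel a b | e a b && (a \in S) && (b \in S)] a b) ->
  forall a b, a \in p ++ r -> b \in p ++ r ->
     connect [rel a b | e a b && (a \in S) && (b \in S)] a b.
Proof.
elim: r p => [|z r IH] p /=; first by rewrite cats0 => _ _ _ H.
case/andP=> /hasP [w wp /andP [ewz ezw]] Hc pS zrS Hp.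
have zS : z \in S by apply: zrS; rewrite inE eqxx.
have wS : w \in S by apply: pS.
rewrite -cat_rcons; apply: IH => //.
- by move=> t; rewrite mem_rcons inE => /orP [/eqP->|/pS].
- by move=> t tr; apply: zrS; rewrite inE tr orbT.
move=> a b; rewrite !mem_rcons !inE => /orP [/eqP->|ap] /orP [/eqP->|bp].
- exact: connect0.
- apply: connect_trans (Hp w b wp bp); apply: connect1 => /=.
  by rewrite ezw zS wS.
- apply: connect_trans (Hp a w ap wp) _; apply: connect1 => /=.
  by rewrite ewz zS wS.
- exact: Hp.
Qed.

Lemma conn_seq (s : seq T) : (if s is r0 :: r then chk [:: r0] r else true) ->
  connected_in e [set z in s].
Proof.
case: s => [|r0 r] H a b; first by rewrite !inE.
rewrite !inE => ha hb.
have := @chkP [set z in r0 :: r] [:: r0] r H.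
apply => //.
- by move=> t; rewrite !inE => /eqP->; rewrite eqxx.
- by move=> t tr; rewrite !inE tr orbT.
- by move=> c d; rewrite !inE => /eqP-> /eqP->; exact: connect0.
Qed.

Definition idx (k : ('I_3 + 'I_4)%type) : nat :=
  match k with inl i => i | inr j => 3 + j end.

Definition good (ss : seq (seq T)) : bool :=
  [&& size ss == 7,
      all (fun s => (s != [::]) && (if s is r0 :: r then chk [:: r0] r else true)) ss,
      all (fun i => all (fun j => (i == j) || ~~ has (mem (nth [::] ss j)) (nth [::] ss i))
               (iota 0 7)) (iota 0 7) &
      all (fun i => all (fun j =>
          has (fun a => has (fun b => e a b) (nth [::] ss j)) (nth [::] ss i)
       && has (fun a => has (fun b => e a b) (nth [::] ss i)) (nth [::] ss j))
       (iota 3 4)) (iota 0 3)].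

Lemma idx_lt k : idx k < 7.
Proof. case: k => [[i hi]|[j hj]] /=; first exact: leq_trans hi _.
by rewrite -[7]/(3+4) ltn_add2l. Qed.

Lemma idx_inj : injective idx.
Proof.
move=> [[i hi]|[j hj]] [[i' hi']|[j' hj']] /= H.
- by congr inl; apply: val_inj.
- by move: hi; rewrite H.
- by move: hi'; rewrite -H.
- by congr inr; apply: val_inj => /=; move: H; rewrite !addSn !add0n; case.
Qed.

Lemma good_minor ss : good ss -> has_minor e K34_rel.
Proof.
case/and4P=> /eqP sz Hne Hdis Hed.
exists (fun k => [set z in nth [::] ss (idx k)]); split.
- move=> k; have /allP := Hne => /(_ (nth [::] ss (idx k))).
  rewrite mem_nth ?sz ?idx_lt // => /(_ isT) /andP [].
  case: (nth [::] ss (idx k)) => [|a r] // _ _.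
  by apply/set0Pn; exists a; rewrite inE inE eqxx.
- move=> k; apply: conn_seq; have /allP := Hne => /(_ (nth [::] ss (idx k))).
  by rewrite mem_nth ?sz ?idx_lt // => /(_ isT) /andP [].
- move=> k k' kk.
  have /allP := Hdis => /(_ (idx k)); rewrite mem_iota idx_lt => /(_ isT) /allP.
  move=> /(_ (idx k')); rewrite mem_iota idx_lt => /(_ isT).
  have -> : (idx k == idx k') = false by apply/negbTE; apply: contra kk => /eqP /idx_inj ->.
  move=> /= /hasPn H; rewrite disjoint_subset; apply/subsetP => z.
  by rewrite !inE => zk; apply/negP => zk'; have := H z zk; rewrite /= zk'.
- move=> [i|j] [i'|j'] //= _.
  + have H1 := elimT allP Hed (nat_of_ord i).
    rewrite mem_iota add0n leq0n ltn_ord in H1; have {H1} := elimT allP (H1 isT) (3 + nat_of_ord j').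
    rewrite mem_iota leq_addr ltn_add2l ltn_ord => /(_ isT).
    case/andP => /hasP [a ha /hasP [b hb eab]] _.
    by exists a, b; rewrite !inE.
  + have H1 := elimT allP Hed (nat_of_ord i').
    rewrite mem_iota add0n leq0n ltn_ord in H1; have {H1} := elimT allP (H1 isT) (3 + nat_of_ord j).
    rewrite mem_iota leq_addr ltn_add2l ltn_ord => /(_ isT).
    case/andP => _ /hasP [a ha /hasP [b hb eab]].
    by exists a, b; rewrite !inE.
Qed.

End Gen.

Definition tbl : seq (nat*nat*nat*nat*seq (seq nat)) := [::
  (0,2,4,3,[:: [:: 4; 5]; [:: 3; 8]; [:: 1; 9; 2; 10]; [:: 0]; [:: 6]; [:: 7]; [:: 11]]);
  (0,2,4,5,[:: [:: 3; 4]; [:: 5; 6]; [:: 2; 9; 10]; [:: 0]; [:: 8]; [:: 11]; [:: 1; 7]]);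
  (0,2,1,6,[:: [:: 4]; [:: 8]; [:: 0; 10]; [:: 3]; [:: 5; 6]; [:: 2; 9]; [:: 1; 7; 11]]);
  (0,2,1,7,[:: [:: 4]; [:: 8]; [:: 0; 10]; [:: 3]; [:: 5; 6]; [:: 2; 9]; [:: 7; 11]]);
  (0,2,1,9,[:: [:: 4]; [:: 8]; [:: 0; 10]; [:: 3]; [:: 5; 6]; [:: 2; 9]; [:: 1; 7; 11]]);
  (0,2,8,6,[:: [:: 8]; [:: 2; 4]; [:: 1; 6]; [:: 7]; [:: 9]; [:: 10; 11]; [:: 0; 3; 5]]);
  (0,2,8,7,[:: [:: 4]; [:: 8]; [:: 0; 10]; [:: 3]; [:: 5; 6]; [:: 2; 9]; [:: 7; 11]]);
  (0,2,8,9,[:: [:: 2; 4]; [:: 8; 11]; [:: 0; 5; 6; 1]; [:: 3]; [:: 7]; [:: 9]; [:: 10]]);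
  (0,2,3,8,[:: [:: 2; 4]; [:: 8; 11]; [:: 0; 5; 6; 1]; [:: 3]; [:: 7]; [:: 9]; [:: 10]]);
  (0,2,4,7,[:: [:: 4]; [:: 8]; [:: 0; 10]; [:: 3]; [:: 5; 6]; [:: 2; 9]; [:: 7; 11]]);
  (0,2,5,6,[:: [:: 2; 4]; [:: 0; 3; 8]; [:: 1; 6; 11]; [:: 5]; [:: 7]; [:: 9]; [:: 10]]);
  (0,3,4,2,[:: [:: 4; 5]; [:: 1; 9; 2]; [:: 3; 8; 10]; [:: 0]; [:: 6]; [:: 7]; [:: 11]]);
  (0,3,4,5,[:: [:: 2; 4]; [:: 1; 6; 5]; [:: 3; 8; 10]; [:: 0]; [:: 7]; [:: 9]; [:: 11]]);
  (0,3,1,6,[:: [:: 4]; [:: 8]; [:: 0; 10]; [:: 3]; [:: 5; 6]; [:: 2; 9]; [:: 1; 7; 11]]);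
  (0,3,1,7,[:: [:: 4]; [:: 8]; [:: 0; 10]; [:: 3]; [:: 5; 6]; [:: 2; 9]; [:: 7; 11]]);
  (0,3,1,9,[:: [:: 4]; [:: 8]; [:: 0; 10]; [:: 3]; [:: 5; 6]; [:: 2; 9]; [:: 1; 7; 11]]);
  (0,3,8,6,[:: [:: 3; 4]; [:: 6; 11]; [:: 0; 2; 9]; [:: 5]; [:: 8]; [:: 10]; [:: 1; 7]]);
  (0,3,8,7,[:: [:: 4]; [:: 8]; [:: 0; 10]; [:: 3]; [:: 5; 6]; [:: 2; 9]; [:: 7; 11]]);
  (0,3,8,9,[:: [:: 3; 4]; [:: 9; 11]; [:: 0; 5; 6]; [:: 2]; [:: 8]; [:: 10]; [:: 1; 7]]);
  (0,3,2,9,[:: [:: 3; 4]; [:: 9; 11]; [:: 0; 5; 6]; [:: 2]; [:: 8]; [:: 10]; [:: 1; 7]]);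
  (0,3,4,7,[:: [:: 4]; [:: 8]; [:: 0; 10]; [:: 3]; [:: 5; 6]; [:: 2; 9]; [:: 7; 11]]);
  (0,3,5,6,[:: [:: 3; 4]; [:: 6; 11]; [:: 0; 2; 9]; [:: 5]; [:: 8]; [:: 10]; [:: 1; 7]]);
  (0,5,4,2,[:: [:: 3; 4]; [:: 2; 9]; [:: 5; 6; 10]; [:: 0]; [:: 8]; [:: 11]; [:: 1; 7]]);
  (0,5,4,3,[:: [:: 2; 4]; [:: 3; 8]; [:: 1; 6; 5; 10]; [:: 0]; [:: 7]; [:: 9]; [:: 11]]);
  (0,5,1,6,[:: [:: 4]; [:: 8]; [:: 0; 10]; [:: 3]; [:: 5; 6]; [:: 2; 9]; [:: 1; 7; 11]]);
  (0,5,1,7,[:: [:: 4]; [:: 8]; [:: 0; 10]; [:: 3]; [:: 5; 6]; [:: 2; 9]; [:: 7; 11]]);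
  (0,5,1,9,[:: [:: 4]; [:: 8]; [:: 0; 10]; [:: 3]; [:: 5; 6]; [:: 2; 9]; [:: 1; 7; 11]]);
  (0,5,8,6,[:: [:: 4; 5]; [:: 8; 11]; [:: 0; 2; 9; 1]; [:: 3]; [:: 6]; [:: 7]; [:: 10]]);
  (0,5,8,7,[:: [:: 4]; [:: 8]; [:: 0; 10]; [:: 3]; [:: 5; 6]; [:: 2; 9]; [:: 7; 11]]);
  (0,5,8,9,[:: [:: 8]; [:: 4; 5]; [:: 1; 9]; [:: 6]; [:: 7]; [:: 10; 11]; [:: 0; 2; 3]]);
  (0,5,2,9,[:: [:: 4; 5]; [:: 0; 3; 8]; [:: 1; 9; 11]; [:: 2]; [:: 6]; [:: 7]; [:: 10]]);
  (0,5,3,8,[:: [:: 4; 5]; [:: 8; 11]; [:: 0; 2; 9; 1]; [:: 3]; [:: 6]; [:: 7]; [:: 10]]);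
  (0,5,4,7,[:: [:: 4]; [:: 8]; [:: 0; 10]; [:: 3]; [:: 5; 6]; [:: 2; 9]; [:: 7; 11]]);
  (4,2,0,3,[:: [:: 4; 5]; [:: 1; 9; 2]; [:: 3; 8; 11]; [:: 0]; [:: 6]; [:: 7]; [:: 10]]);
  (4,2,0,5,[:: [:: 3; 4]; [:: 2; 9]; [:: 5; 6; 11]; [:: 0]; [:: 8]; [:: 10]; [:: 1; 7]]);
  (4,2,1,6,[:: [:: 4]; [:: 0; 2]; [:: 6; 8]; [:: 3]; [:: 5]; [:: 10; 11]; [:: 1; 7; 9]]);
  (4,2,1,7,[:: [:: 3; 8]; [:: 2; 10]; [:: 1; 6; 5]; [:: 0]; [:: 4]; [:: 9]; [:: 7; 11]]);
  (4,2,1,9,[:: [:: 8; 9]; [:: 4; 10]; [:: 0; 5; 6; 1]; [:: 2]; [:: 3]; [:: 7]; [:: 11]]);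
  (4,2,8,6,[:: [:: 4]; [:: 0; 2]; [:: 6; 11]; [:: 5]; [:: 10]; [:: 3; 8]; [:: 1; 7; 9]]);
  (4,2,8,7,[:: [:: 4]; [:: 8]; [:: 0; 2]; [:: 3]; [:: 5; 6]; [:: 10; 11]; [:: 1; 7; 9]]);
  (4,2,8,9,[:: [:: 4]; [:: 8]; [:: 0; 2]; [:: 3]; [:: 5; 6]; [:: 10; 11]; [:: 1; 7; 9]]);
  (4,2,3,8,[:: [:: 4]; [:: 0; 2]; [:: 8; 11]; [:: 3]; [:: 10]; [:: 5; 6]; [:: 1; 7; 9]]);
  (4,2,5,6,[:: [:: 4]; [:: 0; 2]; [:: 6; 11]; [:: 5]; [:: 10]; [:: 3; 8]; [:: 1; 7; 9]]);
  (4,3,0,2,[:: [:: 4; 5]; [:: 3; 8]; [:: 1; 9; 2; 11]; [:: 0]; [:: 6]; [:: 7]; [:: 10]]);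
  (4,3,0,5,[:: [:: 2; 4]; [:: 3; 8]; [:: 1; 6; 5; 11]; [:: 0]; [:: 7]; [:: 9]; [:: 10]]);
  (4,3,1,6,[:: [:: 4]; [:: 8]; [:: 1; 11]; [:: 7]; [:: 5; 6]; [:: 2; 9]; [:: 3; 10]]);
  (4,3,1,7,[:: [:: 4]; [:: 8]; [:: 1; 11]; [:: 7]; [:: 5; 6]; [:: 2; 9]; [:: 3; 10]]);
  (4,3,1,9,[:: [:: 4]; [:: 8]; [:: 1; 11]; [:: 7]; [:: 5; 6]; [:: 2; 9]; [:: 3; 10]]);
  (4,3,8,6,[:: [:: 4]; [:: 8]; [:: 1; 6]; [:: 7]; [:: 2; 9]; [:: 10; 11]; [:: 0; 3; 5]]);
  (4,3,8,7,[:: [:: 5; 6]; [:: 2; 9]; [:: 3; 10]; [:: 0]; [:: 4]; [:: 8]; [:: 1; 7; 11]]);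
  (4,3,8,9,[:: [:: 4]; [:: 8]; [:: 1; 9]; [:: 7]; [:: 5; 6]; [:: 10; 11]; [:: 0; 2; 3]]);
  (4,3,2,9,[:: [:: 4]; [:: 0; 3]; [:: 9; 11]; [:: 2]; [:: 10]; [:: 7; 8]; [:: 1; 6; 5]]);
  (4,3,5,6,[:: [:: 4]; [:: 0; 3]; [:: 6; 11]; [:: 5]; [:: 10]; [:: 7; 8]; [:: 1; 9; 2]]);
  (4,5,0,2,[:: [:: 3; 4]; [:: 5; 6]; [:: 2; 9; 11]; [:: 0]; [:: 8]; [:: 10]; [:: 1; 7]]);
  (4,5,0,3,[:: [:: 2; 4]; [:: 1; 6; 5]; [:: 3; 8; 11]; [:: 0]; [:: 7]; [:: 9]; [:: 10]]);
  (4,5,1,6,[:: [:: 6; 8]; [:: 4; 10]; [:: 0; 2; 9; 1]; [:: 3]; [:: 5]; [:: 7]; [:: 11]]);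
  (4,5,1,7,[:: [:: 3; 8]; [:: 5; 10]; [:: 1; 9; 2]; [:: 0]; [:: 4]; [:: 6]; [:: 7; 11]]);
  (4,5,1,9,[:: [:: 4]; [:: 0; 5]; [:: 8; 9]; [:: 2]; [:: 3]; [:: 10; 11]; [:: 1; 6; 7]]);
  (4,5,8,6,[:: [:: 4]; [:: 8]; [:: 0; 5]; [:: 3]; [:: 2; 9]; [:: 10; 11]; [:: 1; 6; 7]]);
  (4,5,8,7,[:: [:: 4]; [:: 8]; [:: 0; 5]; [:: 3]; [:: 2; 9]; [:: 10; 11]; [:: 1; 6; 7]]);
  (4,5,8,9,[:: [:: 4]; [:: 0; 5]; [:: 8; 11]; [:: 3]; [:: 10]; [:: 2; 9]; [:: 1; 6; 7]]);
  (4,5,2,9,[:: [:: 4]; [:: 0; 5]; [:: 9; 11]; [:: 2]; [:: 10]; [:: 3; 8]; [:: 1; 6; 7]]);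
  (4,5,3,8,[:: [:: 4]; [:: 0; 5]; [:: 8; 11]; [:: 3]; [:: 10]; [:: 2; 9]; [:: 1; 6; 7]]);
  (1,6,0,2,[:: [:: 4]; [:: 8]; [:: 1; 10]; [:: 7]; [:: 5; 6]; [:: 2; 9]; [:: 0; 3; 11]]);
  (1,6,0,3,[:: [:: 4]; [:: 8]; [:: 1; 10]; [:: 7]; [:: 5; 6]; [:: 2; 9]; [:: 3; 11]]);
  (1,6,0,5,[:: [:: 4]; [:: 8]; [:: 1; 10]; [:: 7]; [:: 5; 6]; [:: 2; 9]; [:: 0; 3; 11]]);
  (1,6,4,2,[:: [:: 4]; [:: 0; 2]; [:: 6; 8]; [:: 3]; [:: 5]; [:: 10; 11]; [:: 1; 7; 9]]);
  (1,6,4,3,[:: [:: 4]; [:: 8]; [:: 1; 10]; [:: 7]; [:: 5; 6]; [:: 2; 9]; [:: 3; 11]]);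
  (1,6,4,5,[:: [:: 6; 8]; [:: 4; 11]; [:: 0; 2; 9; 1]; [:: 3]; [:: 5]; [:: 7]; [:: 10]]);
  (1,6,8,7,[:: [:: 4; 7]; [:: 8; 9]; [:: 0; 5; 6; 10]; [:: 1]; [:: 2]; [:: 3]; [:: 11]]);
  (1,6,8,9,[:: [:: 3; 8]; [:: 2; 9]; [:: 5; 6; 10]; [:: 0]; [:: 4]; [:: 11]; [:: 1; 7]]);
  (1,6,2,9,[:: [:: 6; 8]; [:: 1; 7; 4]; [:: 0; 2; 11]; [:: 3]; [:: 5]; [:: 9]; [:: 10]]);
  (1,6,3,8,[:: [:: 4]; [:: 8]; [:: 1; 10]; [:: 7]; [:: 5; 6]; [:: 2; 9]; [:: 3; 11]]);
  (1,6,4,7,[:: [:: 6; 8]; [:: 4; 11]; [:: 0; 2; 9; 1]; [:: 3]; [:: 5]; [:: 7]; [:: 10]]);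
  (1,7,0,2,[:: [:: 4]; [:: 8]; [:: 1; 10]; [:: 7]; [:: 5; 6]; [:: 2; 9]; [:: 0; 3; 11]]);
  (1,7,0,3,[:: [:: 4]; [:: 8]; [:: 1; 10]; [:: 7]; [:: 5; 6]; [:: 2; 9]; [:: 3; 11]]);
  (1,7,0,5,[:: [:: 4]; [:: 8]; [:: 1; 10]; [:: 7]; [:: 5; 6]; [:: 2; 9]; [:: 0; 3; 11]]);
  (1,7,4,2,[:: [:: 3; 8]; [:: 2; 11]; [:: 1; 6; 5]; [:: 0]; [:: 4]; [:: 9]; [:: 7; 10]]);
  (1,7,4,3,[:: [:: 4]; [:: 8]; [:: 1; 10]; [:: 7]; [:: 5; 6]; [:: 2; 9]; [:: 3; 11]]);
  (1,7,4,5,[:: [:: 3; 8]; [:: 5; 11]; [:: 1; 9; 2]; [:: 0]; [:: 4]; [:: 6]; [:: 7; 10]]);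
  (1,7,8,6,[:: [:: 8; 9]; [:: 0; 5; 6]; [:: 4; 7; 10]; [:: 1]; [:: 2]; [:: 3]; [:: 11]]);
  (1,7,8,9,[:: [:: 6; 8]; [:: 0; 2; 9]; [:: 4; 7; 10]; [:: 1]; [:: 3]; [:: 5]; [:: 11]]);
  (1,7,2,9,[:: [:: 3; 8]; [:: 2; 11]; [:: 1; 6; 5]; [:: 0]; [:: 4]; [:: 9]; [:: 7; 10]]);
  (1,7,3,8,[:: [:: 4]; [:: 8]; [:: 1; 10]; [:: 7]; [:: 5; 6]; [:: 2; 9]; [:: 3; 11]]);
  (1,7,5,6,[:: [:: 3; 8]; [:: 5; 11]; [:: 1; 9; 2]; [:: 0]; [:: 4]; [:: 6]; [:: 7; 10]]);
  (1,9,0,2,[:: [:: 4]; [:: 8]; [:: 1; 10]; [:: 7]; [:: 5; 6]; [:: 2; 9]; [:: 0; 3; 11]]);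
  (1,9,0,3,[:: [:: 4]; [:: 8]; [:: 1; 10]; [:: 7]; [:: 5; 6]; [:: 2; 9]; [:: 3; 11]]);
  (1,9,0,5,[:: [:: 4]; [:: 8]; [:: 1; 10]; [:: 7]; [:: 5; 6]; [:: 2; 9]; [:: 0; 3; 11]]);
  (1,9,4,2,[:: [:: 8; 9]; [:: 4; 11]; [:: 0; 5; 6; 1]; [:: 2]; [:: 3]; [:: 7]; [:: 10]]);
  (1,9,4,3,[:: [:: 4]; [:: 8]; [:: 1; 10]; [:: 7]; [:: 5; 6]; [:: 2; 9]; [:: 3; 11]]);
  (1,9,4,5,[:: [:: 4]; [:: 0; 5]; [:: 8; 9]; [:: 2]; [:: 3]; [:: 10; 11]; [:: 1; 6; 7]]);
  (1,9,8,6,[:: [:: 5; 6]; [:: 3; 8]; [:: 2; 9; 10]; [:: 0]; [:: 4]; [:: 11]; [:: 1; 7]]);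
  (1,9,8,7,[:: [:: 4; 7]; [:: 6; 8]; [:: 0; 2; 9; 10]; [:: 1]; [:: 3]; [:: 5]; [:: 11]]);
  (1,9,3,8,[:: [:: 4]; [:: 8]; [:: 1; 10]; [:: 7]; [:: 5; 6]; [:: 2; 9]; [:: 3; 11]]);
  (1,9,4,7,[:: [:: 8; 9]; [:: 4; 11]; [:: 0; 5; 6; 1]; [:: 2]; [:: 3]; [:: 7]; [:: 10]]);
  (1,9,5,6,[:: [:: 8; 9]; [:: 1; 7; 4]; [:: 0; 5; 11]; [:: 2]; [:: 3]; [:: 6]; [:: 10]]);
  (8,6,0,2,[:: [:: 8]; [:: 2; 4]; [:: 1; 6]; [:: 7]; [:: 9]; [:: 10; 11]; [:: 0; 3; 5]]);
  (8,6,0,3,[:: [:: 3; 4]; [:: 6; 10]; [:: 0; 2; 9]; [:: 5]; [:: 8]; [:: 11]; [:: 1; 7]]);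
  (8,6,0,5,[:: [:: 4; 5]; [:: 8; 10]; [:: 0; 2; 9; 1]; [:: 3]; [:: 6]; [:: 7]; [:: 11]]);
  (8,6,4,2,[:: [:: 4]; [:: 0; 2]; [:: 6; 10]; [:: 5]; [:: 11]; [:: 3; 8]; [:: 1; 7; 9]]);
  (8,6,4,3,[:: [:: 4]; [:: 8]; [:: 1; 6]; [:: 7]; [:: 2; 9]; [:: 10; 11]; [:: 0; 3; 5]]);
  (8,6,4,5,[:: [:: 4]; [:: 8]; [:: 0; 5]; [:: 3]; [:: 2; 9]; [:: 10; 11]; [:: 1; 6; 7]]);
  (8,6,1,7,[:: [:: 8; 9]; [:: 0; 5; 6]; [:: 4; 7; 11]; [:: 1]; [:: 2]; [:: 3]; [:: 10]]);
  (8,6,1,9,[:: [:: 5; 6]; [:: 3; 8]; [:: 2; 9; 11]; [:: 0]; [:: 4]; [:: 10]; [:: 1; 7]]);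
  (8,6,2,9,[:: [:: 8]; [:: 1; 6]; [:: 2; 11]; [:: 9]; [:: 10]; [:: 4; 7]; [:: 0; 3; 5]]);
  (8,6,4,7,[:: [:: 8]; [:: 1; 6]; [:: 4; 11]; [:: 7]; [:: 10]; [:: 2; 9]; [:: 0; 3; 5]]);
  (8,7,0,2,[:: [:: 4]; [:: 8]; [:: 0; 11]; [:: 3]; [:: 5; 6]; [:: 2; 9]; [:: 7; 10]]);
  (8,7,0,3,[:: [:: 4]; [:: 8]; [:: 0; 11]; [:: 3]; [:: 5; 6]; [:: 2; 9]; [:: 7; 10]]);
  (8,7,0,5,[:: [:: 4]; [:: 8]; [:: 0; 11]; [:: 3]; [:: 5; 6]; [:: 2; 9]; [:: 7; 10]]);
  (8,7,4,2,[:: [:: 4]; [:: 8]; [:: 0; 2]; [:: 3]; [:: 5; 6]; [:: 10; 11]; [:: 1; 7; 9]]);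
  (8,7,4,3,[:: [:: 5; 6]; [:: 2; 9]; [:: 7; 10]; [:: 1]; [:: 4]; [:: 8]; [:: 0; 3; 11]]);
  (8,7,4,5,[:: [:: 4]; [:: 8]; [:: 0; 5]; [:: 3]; [:: 2; 9]; [:: 10; 11]; [:: 1; 6; 7]]);
  (8,7,1,6,[:: [:: 4; 7]; [:: 8; 9]; [:: 0; 5; 6; 11]; [:: 1]; [:: 2]; [:: 3]; [:: 10]]);
  (8,7,1,9,[:: [:: 4; 7]; [:: 6; 8]; [:: 0; 2; 9; 11]; [:: 1]; [:: 3]; [:: 5]; [:: 10]]);
  (8,7,2,9,[:: [:: 8]; [:: 1; 7]; [:: 2; 11]; [:: 9]; [:: 10]; [:: 3; 4]; [:: 0; 5; 6]]);
  (8,7,5,6,[:: [:: 8]; [:: 1; 7]; [:: 5; 11]; [:: 6]; [:: 10]; [:: 3; 4]; [:: 0; 2; 9]]);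
  (8,9,0,2,[:: [:: 2; 4]; [:: 8; 10]; [:: 0; 5; 6; 1]; [:: 3]; [:: 7]; [:: 9]; [:: 11]]);
  (8,9,0,3,[:: [:: 3; 4]; [:: 9; 10]; [:: 0; 5; 6]; [:: 2]; [:: 8]; [:: 11]; [:: 1; 7]]);
  (8,9,0,5,[:: [:: 8]; [:: 4; 5]; [:: 1; 9]; [:: 6]; [:: 7]; [:: 10; 11]; [:: 0; 2; 3]]);
  (8,9,4,2,[:: [:: 4]; [:: 8]; [:: 0; 2]; [:: 3]; [:: 5; 6]; [:: 10; 11]; [:: 1; 7; 9]]);
  (8,9,4,3,[:: [:: 4]; [:: 8]; [:: 1; 9]; [:: 7]; [:: 5; 6]; [:: 10; 11]; [:: 0; 2; 3]]);
  (8,9,4,5,[:: [:: 4]; [:: 0; 5]; [:: 8; 10]; [:: 3]; [:: 11]; [:: 2; 9]; [:: 1; 6; 7]]);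
  (8,9,1,6,[:: [:: 3; 8]; [:: 2; 9]; [:: 5; 6; 11]; [:: 0]; [:: 4]; [:: 10]; [:: 1; 7]]);
  (8,9,1,7,[:: [:: 6; 8]; [:: 0; 2; 9]; [:: 4; 7; 11]; [:: 1]; [:: 3]; [:: 5]; [:: 10]]);
  (8,9,4,7,[:: [:: 8]; [:: 1; 9]; [:: 4; 11]; [:: 7]; [:: 10]; [:: 5; 6]; [:: 0; 2; 3]]);
  (8,9,5,6,[:: [:: 8]; [:: 1; 9]; [:: 5; 11]; [:: 6]; [:: 10]; [:: 4; 7]; [:: 0; 2; 3]]);
  (2,9,0,3,[:: [:: 3; 4]; [:: 9; 10]; [:: 0; 5; 6]; [:: 2]; [:: 8]; [:: 11]; [:: 1; 7]]);
  (2,9,0,5,[:: [:: 4; 5]; [:: 0; 3; 8]; [:: 1; 9; 10]; [:: 2]; [:: 6]; [:: 7]; [:: 11]]);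
  (2,9,4,3,[:: [:: 4]; [:: 0; 3]; [:: 9; 10]; [:: 2]; [:: 11]; [:: 7; 8]; [:: 1; 6; 5]]);
  (2,9,4,5,[:: [:: 4]; [:: 0; 5]; [:: 9; 10]; [:: 2]; [:: 11]; [:: 3; 8]; [:: 1; 6; 7]]);
  (2,9,1,6,[:: [:: 6; 8]; [:: 1; 7; 4]; [:: 0; 2; 10]; [:: 3]; [:: 5]; [:: 9]; [:: 11]]);
  (2,9,1,7,[:: [:: 3; 8]; [:: 2; 10]; [:: 1; 6; 5]; [:: 0]; [:: 4]; [:: 9]; [:: 7; 11]]);
  (2,9,8,6,[:: [:: 8]; [:: 1; 6]; [:: 2; 10]; [:: 9]; [:: 11]; [:: 4; 7]; [:: 0; 3; 5]]);
  (2,9,8,7,[:: [:: 8]; [:: 1; 7]; [:: 2; 10]; [:: 9]; [:: 11]; [:: 3; 4]; [:: 0; 5; 6]]);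
  (2,9,3,8,[:: [:: 4; 7]; [:: 9; 10]; [:: 0; 5; 6]; [:: 1]; [:: 2]; [:: 8]; [:: 3; 11]]);
  (2,9,4,7,[:: [:: 3; 8]; [:: 2; 10]; [:: 1; 6; 5]; [:: 0]; [:: 4]; [:: 9]; [:: 7; 11]]);
  (2,9,5,6,[:: [:: 10; 11]; [:: 1; 7; 4]; [:: 0; 3; 8]; [:: 2]; [:: 5]; [:: 6]; [:: 9]]);
  (3,8,0,2,[:: [:: 2; 4]; [:: 8; 10]; [:: 0; 5; 6; 1]; [:: 3]; [:: 7]; [:: 9]; [:: 11]]);
  (3,8,0,5,[:: [:: 4; 5]; [:: 8; 10]; [:: 0; 2; 9; 1]; [:: 3]; [:: 6]; [:: 7]; [:: 11]]);
  (3,8,4,2,[:: [:: 4]; [:: 0; 2]; [:: 8; 10]; [:: 3]; [:: 11]; [:: 5; 6]; [:: 1; 7; 9]]);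
  (3,8,4,5,[:: [:: 4]; [:: 0; 5]; [:: 8; 10]; [:: 3]; [:: 11]; [:: 2; 9]; [:: 1; 6; 7]]);
  (3,8,1,6,[:: [:: 4]; [:: 8]; [:: 1; 11]; [:: 7]; [:: 5; 6]; [:: 2; 9]; [:: 3; 10]]);
  (3,8,1,7,[:: [:: 4]; [:: 8]; [:: 1; 11]; [:: 7]; [:: 5; 6]; [:: 2; 9]; [:: 3; 10]]);
  (3,8,1,9,[:: [:: 4]; [:: 8]; [:: 1; 11]; [:: 7]; [:: 5; 6]; [:: 2; 9]; [:: 3; 10]]);
  (3,8,2,9,[:: [:: 4; 7]; [:: 9; 11]; [:: 0; 5; 6]; [:: 1]; [:: 2]; [:: 8]; [:: 3; 10]]);
  (3,8,4,7,[:: [:: 5; 6]; [:: 2; 9]; [:: 3; 10]; [:: 0]; [:: 4]; [:: 8]; [:: 1; 7; 11]]);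
  (3,8,5,6,[:: [:: 4; 7]; [:: 6; 11]; [:: 0; 2; 9]; [:: 1]; [:: 5]; [:: 8]; [:: 3; 10]]);
  (4,7,0,2,[:: [:: 4]; [:: 8]; [:: 0; 11]; [:: 3]; [:: 5; 6]; [:: 2; 9]; [:: 7; 10]]);
  (4,7,0,3,[:: [:: 4]; [:: 8]; [:: 0; 11]; [:: 3]; [:: 5; 6]; [:: 2; 9]; [:: 7; 10]]);
  (4,7,0,5,[:: [:: 4]; [:: 8]; [:: 0; 11]; [:: 3]; [:: 5; 6]; [:: 2; 9]; [:: 7; 10]]);
  (4,7,1,6,[:: [:: 6; 8]; [:: 4; 10]; [:: 0; 2; 9; 1]; [:: 3]; [:: 5]; [:: 7]; [:: 11]]);
  (4,7,1,9,[:: [:: 8; 9]; [:: 4; 10]; [:: 0; 5; 6; 1]; [:: 2]; [:: 3]; [:: 7]; [:: 11]]);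
  (4,7,8,6,[:: [:: 8]; [:: 1; 6]; [:: 4; 10]; [:: 7]; [:: 11]; [:: 2; 9]; [:: 0; 3; 5]]);
  (4,7,8,9,[:: [:: 8]; [:: 1; 9]; [:: 4; 10]; [:: 7]; [:: 11]; [:: 5; 6]; [:: 0; 2; 3]]);
  (4,7,2,9,[:: [:: 3; 8]; [:: 2; 11]; [:: 1; 6; 5]; [:: 0]; [:: 4]; [:: 9]; [:: 7; 10]]);
  (4,7,3,8,[:: [:: 5; 6]; [:: 2; 9]; [:: 7; 10]; [:: 1]; [:: 4]; [:: 8]; [:: 0; 3; 11]]);
  (4,7,5,6,[:: [:: 3; 8]; [:: 5; 11]; [:: 1; 9; 2]; [:: 0]; [:: 4]; [:: 6]; [:: 7; 10]]);
  (5,6,0,2,[:: [:: 2; 4]; [:: 0; 3; 8]; [:: 1; 6; 10]; [:: 5]; [:: 7]; [:: 9]; [:: 11]]);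
  (5,6,0,3,[:: [:: 3; 4]; [:: 6; 10]; [:: 0; 2; 9]; [:: 5]; [:: 8]; [:: 11]; [:: 1; 7]]);
  (5,6,4,2,[:: [:: 4]; [:: 0; 2]; [:: 6; 10]; [:: 5]; [:: 11]; [:: 3; 8]; [:: 1; 7; 9]]);
  (5,6,4,3,[:: [:: 4]; [:: 0; 3]; [:: 6; 10]; [:: 5]; [:: 11]; [:: 7; 8]; [:: 1; 9; 2]]);
  (5,6,1,7,[:: [:: 3; 8]; [:: 5; 10]; [:: 1; 9; 2]; [:: 0]; [:: 4]; [:: 6]; [:: 7; 11]]);
  (5,6,1,9,[:: [:: 8; 9]; [:: 1; 7; 4]; [:: 0; 5; 10]; [:: 2]; [:: 3]; [:: 6]; [:: 11]]);
  (5,6,8,7,[:: [:: 8]; [:: 1; 7]; [:: 5; 10]; [:: 6]; [:: 11]; [:: 3; 4]; [:: 0; 2; 9]]);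
  (5,6,8,9,[:: [:: 8]; [:: 1; 9]; [:: 5; 10]; [:: 6]; [:: 11]; [:: 4; 7]; [:: 0; 2; 3]]);
  (5,6,2,9,[:: [:: 10; 11]; [:: 1; 7; 4]; [:: 0; 3; 8]; [:: 2]; [:: 5]; [:: 6]; [:: 9]]);
  (5,6,3,8,[:: [:: 4; 7]; [:: 6; 10]; [:: 0; 2; 9]; [:: 1]; [:: 5]; [:: 8]; [:: 3; 11]]);
  (5,6,4,7,[:: [:: 3; 8]; [:: 5; 10]; [:: 1; 9; 2]; [:: 0]; [:: 4]; [:: 6]; [:: 7; 11]])].

Definition ords10 : seq 'I_10 := [:: @Ordinal 10 0 erefl; @Ordinal 10 1 erefl; @Ordinal 10 2 erefl; @Ordinal 10 3 erefl; @Ordinal 10 4 erefl; @Ordinal 10 5 erefl; @Ordinal 10 6 erefl; @Ordinal 10 7 erefl; @Ordinal 10 8 erefl; @Ordinal 10 9 erefl].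

Lemma mem_ords10 (u : 'I_10) : u \in ords10.
Proof.
have H : map val ords10 = iota 0 10 by [].
by rewrite -(mem_map val_inj) H mem_iota ltn_ord.
Qed.

Definition enc (n : nat) : ('I_10 + bool)%type :=
  if n < 10 then inl (nth ord0 ords10 n) else inr (n == 11).

Definition sameu (a b u v : nat) : bool := ((a == u) && (b == v)) || ((a == v) && (b == u)).

Definition lookup (u v x y : nat) : seq (seq ('I_10 + bool)%type) :=
  map (map enc) (odflt [::] (ohead [seq t.2 | t <- tbl &
      sameu t.1.1.1.1 t.1.1.1.2 u v && sameu t.1.1.2 t.1.2 x y])).

Definition allq : bool :=
  all (fun u => all (fun v => all (fun x => all (fun y =>
    [&& F4_adj u v, F4_adj x y, u != x, u != y, v != x & v != y] ==>
    good (H_rel u v x y) (lookup u v x y)) ords10) ords10) ords10)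
    ords10.

Lemma allq_true : allq.
Proof. vm_compute. reflexivity. Qed.

Theorem lemma4p14 (u v x y : 'I_10) :
  F4_adj u v -> F4_adj x y ->
  u != x -> u != y -> v != x -> v != y ->
  has_minor (H_rel u v x y) K34_rel.
Proof.
move=> h1 h2 h3 h4 h5 h6.
apply: (@good_minor _ _ (lookup u v x y)).
have := allq_true; rewrite /allq => /allP /(_ u (mem_ords10 u)) /allP /(_ v (mem_ords10 v)).
move=> /allP /(_ x (mem_ords10 x)) /allP /(_ y (mem_ords10 y)).
by rewrite h1 h2 h3 h4 h5 h6.
Qed.
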